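(* Let $q$ be an odd prime power, $p$ its characteristic, $d\ge2$ an integer and $t\in\mathbb{F}_q^{\times}$. Let $\omega$ be a generator of the group of multiplicative characters of $\mathbb{F}_q^{\times}$, $\phi$ the unique character of order $2$, $\zeta_p$ a primitive $p$-th root of unity, and for a character $\chi$ let $g_q(\chi)=\sum_{x\in\mathbb{F}_q^{\times}}\chi(x)\zeta_p^{\mathrm{tr}(x)}$, where $\mathrm{tr}:\mathbb{F}_q\to\mathbb{F}_p$ is the trace. Define $$H_q(t)=\frac{(-1)^d}{1-q}\sum_{m=0}^{q-2}\left(\frac{g_q(\phi\omega^m)\,g_q(\omega^{-m})}{g_q(\phi)}\right)^d\omega\big((-1)^dt\big)^m.$$ Then the number of points $(x_1,\dots,x_d)\in(\mathbb{F}_q^{\times})^d$ on the hypersurface $$X_t:\ \prod_{i=1}^d\left(x_i+2+x_i^{-1}\right)=4^d t^{-1}$$ equals $$\frac{(q-2)^d-(-1)^d}{q-1}-(-1)^dH_q(t).$$ *)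

(* Defs.v *)
From HB Require Import structures.
From mathcomp Require Import all_boot all_order all_algebra all_field.
Set Implicit Arguments. Unset Strict Implicit. Unset Printing Implicit Defensive.
Import Order.TTheory GRing.Theory Num.Theory.
Local Open Scope ring_scope.

(* A multiplicative character of F^x, valued in algC; values at 0 are
   irrelevant (never used). *)
Definition mult_char (F : finFieldType) (chi : F -> algC) : Prop :=
  chi 1 = 1 /\ forall x y : F, x != 0 -> y != 0 -> chi (x * y) = chi x * chi y.

Definition char_generator (F : finFieldType) (omega : F -> algC) : Prop :=
  mult_char omega /\
  forall chi : F -> algC, mult_char chi ->
    exists m : nat, forall x : F, x != 0 -> chi x = omega x ^+ m.

Definition order2_char (F : finFieldType) (phi : F -> algC) : Prop :=
  mult_char phi /\ (exists x : F, x != 0 /\ phi x != 1) /\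
  forall x : F, x != 0 -> phi x ^+ 2 = 1.

Definition abs_trace (F : finFieldType) (p : nat) (x : F) : F :=
  \sum_(i < logn p #|F|) x ^+ (p ^ i).

Definition trace_nat (F : finFieldType) (p : nat) (x : F) : nat :=
  odflt 0%N (omap (@nat_of_ord p) [pick k : 'I_p | (k%:R : F) == abs_trace p x]).

Definition gauss_sum (F : finFieldType) (p : nat) (zeta : algC)
    (chi : F -> algC) : algC :=
  \sum_(x : F | x != 0) chi x * zeta ^+ trace_nat p x.

Definition Hq (F : finFieldType) (p : nat) (zeta : algC) (omega phi : F -> algC)
    (d : nat) (t : F) : algC :=
  let q := #|F| in
  (-1) ^+ d / (1 - q%:R) *
  \sum_(m < q.-1)
    ((gauss_sum p zeta (fun x => phi x * omega x ^+ m) *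
      gauss_sum p zeta (fun x => (omega x ^+ m)^-1)) /
      gauss_sum p zeta phi) ^+ d *
    omega ((-1) ^+ d * t) ^+ m.

Definition Xt_points (F : finFieldType) (d : nat) (t : F) : {set {ffun 'I_d -> F}} :=
  [set x : {ffun 'I_d -> F} | [forall i, x i != 0] &&
     (\prod_(i < d) (x i + 2 + (x i)^-1) == 4 ^+ d * t^-1)].

(* Main.v *)
Require Import Defs.
From HB Require Import structures.
From mathcomp Require Import all_boot all_order all_algebra all_field.
From mathcomp Require Import cyclic ring.
Set Implicit Arguments. Unset Strict Implicit. Unset Printing Implicit Defensive.
Import Order.TTheory GRing.Theory Num.Theory.
Local Open Scope ring_scope.
Lemma frobD_iter (F : finFieldType) (p : nat) (pF : p \in [pchar F]) (i : nat) (x y : F) :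
  (x + y) ^+ (p ^ i) = x ^+ (p ^ i) + y ^+ (p ^ i).
Proof.
elim: i => [|i IH]; first by rewrite expn0 !expr1.
by rewrite expnSr !exprM IH -!(pFrobenius_autE pF) pFrobenius_autD_comm //; apply: mulrC.
Qed.

Lemma card_pn (F : finFieldType) (p : nat) (pF : p \in [pchar F]) :
  #|F| = (p ^ logn p #|F|)%N.
Proof. exact: (card_pprimeChar pF). Qed.

Lemma logF_gt0 (F : finFieldType) (p : nat) (pF : p \in [pchar F]) :
  (0 < logn p #|F|)%N.
Proof.
have := card_pn pF; have := finNzRing_gt1 F.
by case: (logn p #|F|) => // /[swap] ->; rewrite expn0.
Qed.

Lemma tr_add (F : finFieldType) (p : nat) (pF : p \in [pchar F]) (x y : F) :
  abs_trace p (x + y) = abs_trace p x + abs_trace p y.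
Proof.
by rewrite /abs_trace -big_split /=; apply: eq_bigr => i _; rewrite (frobD_iter pF).
Qed.

Lemma tr_frob (F : finFieldType) (p : nat) (pF : p \in [pchar F]) (x : F) :
  abs_trace p x ^+ p = abs_trace p x.
Proof.
rewrite /abs_trace -(pFrobenius_autE pF) rmorph_sum /=.
have := card_pn pF; have := logF_gt0 pF.
case: (logn p #|F|) => // n _ Hc.
rewrite big_ord_recr big_ord_recl /= expn0 expr1.
rewrite (pFrobenius_autE pF) -exprM -expnSr -Hc expf_card addrC; congr (_ + _).
by apply: eq_bigr => i _; rewrite (pFrobenius_autE pF) -exprM -expnSr.
Qed.
Lemma natF_mod (F : finFieldType) (p : nat) (pF : p \in [pchar F]) (a b : nat) :
  (a%:R : F) = b%:R -> (a = b %[mod p])%N.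
Proof.
wlog le_ba : a b / (b <= a)%N.
  by move=> W; case: (leqP b a) => [|/ltnW] H E; [apply: W|apply/esym/W].
move=> E; apply/eqP; rewrite eqn_mod_dvd // (dvdn_pcharf pF) natrB // E subrr.
by [].
Qed.

Lemma prime_field_elt (F : finFieldType) (p : nat) (pF : p \in [pchar F]) (y : F) :
  y ^+ p = y -> exists k : 'I_p, y = k%:R.
Proof.
move=> Hy; case: (boolP [exists k : 'I_p, y == k%:R]) => [/existsP [k /eqP ->]|/existsPn Hn]; first by exists k.
exfalso.
have p2 : (1 < p)%N := prime_gt1 (pcharf_prime pF).
pose P : {poly F} := 'X^p - 'X.
have sP : size P = p.+1.
  by rewrite /P size_polyDl ?size_polyXn // size_polyN size_polyX ltnS.
have P0 : P != 0 by rewrite -size_poly_eq0 sP.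
pose rs := y :: [seq (val k)%:R | k <- enum 'I_p].
have Hall : all (root P) rs.
  apply/allP => z; rewrite inE => /orP [/eqP ->|/mapP [k _ ->]];
    rewrite /root /P !hornerE ?Hy ?subrr //.
  by rewrite -(pFrobenius_autE pF) pFrobenius_aut_nat subrr.
have Hu : uniq rs.
rewrite /= map_inj_uniq ?enum_uniq ?andbT.
  apply/mapP => [[k _ Ek]]; by have := Hn k; rewrite Ek eqxx.
move=> i j /(natF_mod pF); rewrite !modn_small //= => Eij.
by apply: val_inj.
have := max_poly_roots P0 Hall Hu.
by rewrite sP /= size_map size_enum_ord ltnn.
Qed.

Lemma trace_natP (F : finFieldType) (p : nat) (pF : p \in [pchar F]) (x : F) :
  ((trace_nat p x)%:R = abs_trace p x) /\ (trace_nat p x < p)%N.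
Proof.
rewrite /trace_nat; case: pickP => [k /eqP Hk | H] /=; first by [].
have [k Hk] := prime_field_elt pF (tr_frob pF x).
by have := H k; rewrite Hk eqxx.
Qed.

Lemma psiD (F : finFieldType) (p : nat) (pF : p \in [pchar F]) (zeta : algC)
  (Hz : p.-primitive_root zeta) (x y : F) :
  zeta ^+ trace_nat p (x + y) = zeta ^+ trace_nat p x * zeta ^+ trace_nat p y.
Proof.
rewrite -exprD; apply/eqP; rewrite (eq_prim_root_expr Hz); apply/eqP/(natF_mod pF).
by rewrite natrD !(proj1 (trace_natP pF _)) tr_add.
Qed.
Lemma size_trpoly (F : finFieldType) (p : nat) (p2 : (1 < p)%N) (k : nat) :
  size (\sum_(i < k.+1) 'X^(p ^ i) : {poly F}) = (p ^ k).+1.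
Proof.
elim: k => [|k IH]; first by rewrite big_ord1 expn0 size_polyX.
rewrite big_ord_recr /= addrC size_polyDl ?size_polyXn // IH ltnS.
by rewrite ltn_exp2l.
Qed.

Lemma tr_nonzero (F : finFieldType) (p : nat) (pF : p \in [pchar F]) :
  exists x : F, abs_trace p x != 0.
Proof.
have p2 : (1 < p)%N := prime_gt1 (pcharf_prime pF).
have Hc := card_pn pF; have := logF_gt0 pF.
rewrite /abs_trace; move: Hc; case: (logn p #|F|) => // k Hc _.
case: (boolP [exists x : F, \sum_(i < k.+1) x ^+ (p ^ i) != 0]) =>
  [/existsP [x Hx]|/existsPn Hn]; first by exists x.
exfalso.
pose T : {poly F} := \sum_(i < k.+1) 'X^(p ^ i).
have sT : size T = (p ^ k).+1 := size_trpoly F p2 k.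
have T0 : T != 0 by rewrite -size_poly_eq0 sT.
have Hall : all (root T) (enum F).
  apply/allP => x _; rewrite /root /T horner_sum.
  under eq_bigr do rewrite hornerXn.
  by have := Hn x; rewrite negbK.
have := @max_poly_roots _ T (enum F) T0 Hall (enum_uniq _).
by rewrite sT -cardE Hc ltnS leqNgt ltn_exp2l // ltnSn.
Qed.

Lemma psi_sum0 (F : finFieldType) (p : nat) (pF : p \in [pchar F]) (zeta : algC)
  (Hz : p.-primitive_root zeta) (c : F) : c != 0 ->
  \sum_(x : F) zeta ^+ trace_nat p (c * x) = 0.
Proof.
move=> c0.
have -> : \sum_(x : F) zeta ^+ trace_nat p (c * x) = \sum_(x : F) zeta ^+ trace_nat p x.
  by rewrite [RHS](reindex_inj (mulfI c0)).
have [x0 Hx0] := tr_nonzero pF.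
have Hne : zeta ^+ trace_nat p x0 != 1.
  rewrite -(expr0 zeta) (eq_prim_root_expr Hz) mod0n modn_small ?(proj2 (trace_natP pF _)) //.
  by apply: contra Hx0 => /eqP H; rewrite -(proj1 (trace_natP pF x0)) H.
set S := \sum_x _.
have : S = zeta ^+ trace_nat p x0 * S.
  rewrite {1}/S [LHS](reindex_inj (addrI x0)) mulr_sumr; apply: eq_bigr => x _.
  by rewrite (psiD pF Hz).
move/eqP; rewrite -subr_eq0 -{1}(mul1r S) -mulrBl mulf_eq0 subr_eq0 eq_sym (negbTE Hne) /=.
by move/eqP.
Qed.
Lemma unit_pow (F : finFieldType) (x : F) : x != 0 -> x ^+ #|F|.-1 = 1.
Proof.
move=> x0; apply: (mulfI x0); rewrite mulr1 -exprS prednK ?expf_card //.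
exact: ltnW (finNzRing_gt1 F).
Qed.

Lemma mc_pow (F : finFieldType) (chi : F -> algC) (x : F) (k : nat) :
  mult_char chi -> x != 0 -> chi (x ^+ k) = chi x ^+ k.
Proof.
move=> [c1 cM] x0; elim: k => [|k IH]; first by rewrite !expr0.
by rewrite !exprS cM ?IH // expf_neq0.
Qed.

Lemma mc_root (F : finFieldType) (chi : F -> algC) (x : F) :
  mult_char chi -> x != 0 -> chi x ^+ #|F|.-1 = 1.
Proof. by move=> Hc x0; rewrite -mc_pow // unit_pow // (proj1 Hc). Qed.

Lemma mc_neq0 (F : finFieldType) (chi : F -> algC) (x : F) :
  mult_char chi -> x != 0 -> chi x != 0.
Proof.
move=> Hc x0; apply/eqP => E; have := mc_root Hc x0; rewrite E expr0n.
have q1 : (0 < #|F|.-1)%N by rewrite -ltnS prednK ?finNzRing_gt1 //; apply: ltnW (finNzRing_gt1 F).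
by rewrite eqn0Ngt q1 /= => /eqP; rewrite eq_sym oner_eq0.
Qed.

Lemma mc_inv (F : finFieldType) (chi : F -> algC) (x : F) :
  mult_char chi -> x != 0 -> chi x^-1 = (chi x)^-1.
Proof.
move=> Hc x0; have c0 := mc_neq0 Hc x0.
apply: (mulfI c0); rewrite mulfV // -(proj2 Hc) ?invr_eq0 // mulfV //.
exact: (proj1 Hc).
Qed.

Lemma mc_prod (F : finFieldType) (chi : F -> algC) (I : finType) (a : I -> F) :
  mult_char chi -> (forall i, a i != 0) -> chi (\prod_i a i) = \prod_i chi (a i).
Proof.
move=> Hc Ha; rewrite /index_enum; elim: (Finite.enum I) => [|i s IH].
  by rewrite !big_nil (proj1 Hc).
rewrite !big_cons (proj2 Hc) ?IH //.
by rewrite prodf_seq_neq0; apply/allP => j _; rewrite Ha.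
Qed.

Definition dlog (F : finFieldType) (g : F) (x : F) : nat :=
  odflt 0%N (omap val [pick i : 'I_(#|F|.-1) | g ^+ i == x]).

Lemma exists_gen (F : finFieldType) : exists g : F, (#|F|.-1).-primitive_root g.
Proof.
have := @has_prim_root F #|F|.-1 (enum [pred x : F | x != 0]).
case/(_ _ _ _ _)/hasP.
- by rewrite -ltnS prednK ?finNzRing_gt1 //; apply: ltnW (finNzRing_gt1 F).
- by apply/allP => x; rewrite mem_enum inE => x0; rewrite unity_rootE unit_pow.
- exact: enum_uniq.
- by rewrite -cardE cardC1.
by move=> g _ Hg; exists g.
Qed.

Lemma dlogP (F : finFieldType) (g : F) (x : F) :
  (#|F|.-1).-primitive_root g -> x != 0 -> g ^+ dlog g x = x.
Proof.
move=> Hg x0; rewrite /dlog; case: pickP => [i /eqP //|H].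
have [i Hi] := prim_rootP Hg (unit_pow x0).
by have := H i; rewrite Hi eqxx.
Qed.

Lemma faithful_char (F : finFieldType) (g : F) :
  (#|F|.-1).-primitive_root g -> exists chi : F -> algC, mult_char chi /\
    forall x, x != 0 -> chi x = 1 -> x = 1.
Proof.
move=> Hg; have n0 : (0 < #|F|.-1)%N by rewrite -ltnS prednK ?finNzRing_gt1 //; apply: ltnW (finNzRing_gt1 F).
have [e He] := C_prim_root_exists n0.
exists (fun x => e ^+ dlog g x); split; first split.
- apply/eqP; rewrite -(expr0 e) (eq_prim_root_expr He) -(eq_prim_root_expr Hg).
  by rewrite dlogP ?oner_eq0 // expr0.
- move=> x y x0 y0; rewrite -exprD; apply/eqP; rewrite (eq_prim_root_expr He).
  by rewrite -(eq_prim_root_expr Hg) exprD !dlogP // mulf_neq0.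
- move=> x x0 /eqP; rewrite -(expr0 e) (eq_prim_root_expr He) -(eq_prim_root_expr Hg).
  by rewrite dlogP // expr0 => /eqP.
Qed.

Lemma omega_faithful (F : finFieldType) (omega : F -> algC) (x : F) :
  char_generator omega -> x != 0 -> omega x = 1 -> x = 1.
Proof.
move=> [Hw Hgen] x0 wx; have [g Hg] := exists_gen F.
have [chi [Hc Hf]] := faithful_char Hg.
have [m Hm] := Hgen chi Hc.
by apply: Hf => //; rewrite Hm // wx expr1n.
Qed.
Lemma q1_gt0 (F : finFieldType) : (0 < #|F|.-1)%N.
Proof. by rewrite -ltnS prednK ?finNzRing_gt1 //; apply: ltnW (finNzRing_gt1 F). Qed.

Lemma orth1 (F : finFieldType) (omega : F -> algC) (a : F) :
  char_generator omega -> a != 0 ->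
  \sum_(m < #|F|.-1) omega a ^+ m = ((a == 1)%:R * (#|F|.-1)%:R : algC).
Proof.
move=> Hg a0; case: eqP => [->|a1].
  by rewrite (proj1 (proj1 Hg)) mul1r; under eq_bigr do rewrite expr1n; rewrite sumr_const card_ord.
rewrite mul0r; have z1 : omega a != 1 by apply/eqP => /(omega_faithful Hg a0).
have := subrX1 (omega a) #|F|.-1; rewrite mc_root; last 2 first.
- exact: (proj1 Hg).
- exact: a0.
move=> /esym/eqP; rewrite subrr.
by rewrite mulf_eq0 subr_eq0 (negbTE z1) => /eqP.
Qed.

Lemma orth2 (F : finFieldType) (omega : F -> algC) (m : nat) :
  char_generator omega -> (m < #|F|.-1)%N ->
  \sum_(u : F | u != 0) omega u ^+ m = ((m == 0)%N%:R * (#|F|.-1)%:R : algC).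
Proof.
move=> Hg mlt; have Hw := proj1 Hg; case: (m =P 0)%N => [->|m0].
  under eq_bigr do rewrite expr0.
  by rewrite sumr_const mul1r -(cardC1 (0 : F)); congr (_ *+ _); apply: eq_card.
rewrite mul0r; have [g Hgen] := exists_gen F.
have g0 : g != 0.
  apply/eqP => g0; have := prim_expr_order Hgen; rewrite g0 expr0n.
  by rewrite eqn0Ngt q1_gt0 /= => /eqP; rewrite eq_sym oner_eq0.
have z1 : omega g ^+ m != 1.
  apply/eqP; rewrite -mc_pow // => /(omega_faithful Hg (expf_neq0 _ g0)) /eqP.
  rewrite -(expr0 g) (eq_prim_root_expr Hgen) mod0n modn_small //.
  by move/eqP.
set S := \sum_(u | u != 0) _.
have : S = omega g ^+ m * S.
  rewrite {1}/S (reindex_inj (mulfI g0)) mulr_sumr /=.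
  rewrite (eq_bigl (fun u => u != 0)); last by move=> u; rewrite mulf_eq0 (negbTE g0).
  by apply: eq_bigr => u u0; rewrite (proj2 Hw) // exprMn.
move/eqP; rewrite -subr_eq0 -{1}(mul1r S) -mulrBl mulf_eq0 subr_eq0 eq_sym (negbTE z1) /=.
by move/eqP.
Qed.
Lemma two_neq0 (F : finFieldType) : odd #|F| -> (2 : F) != 0.
Proof.
move=> oq; have [p pp pF] := finPcharP F; apply/negP => /eqP H2.
have : (p %| 2)%N by rewrite (dvdn_pcharf pF) H2.
rewrite dvdn_prime2 // => /eqP p2; move: oq; rewrite (card_pn pF) p2 oddX /=.
by have := logF_gt0 pF; rewrite -p2 lt0n => /negbTE ->.
Qed.

Lemma neq_opp (F : finFieldType) (x : F) : odd #|F| -> x != 0 -> x != - x.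
Proof.
move=> oq x0; apply/eqP => /eqP; rewrite -subr_eq0 opprK -mulr2n -mulr_natl.
by rewrite mulf_eq0 (negbTE (two_neq0 oq)) (negbTE x0).
Qed.

Lemma mc_sum0 (F : finFieldType) (chi : F -> algC) (a : F) :
  mult_char chi -> a != 0 -> chi a != 1 -> \sum_(u : F | u != 0) chi u = 0.
Proof.
move=> Hc a0 z1; set S := \sum_(u | u != 0) _.
have : S = chi a * S.
  rewrite {1}/S (reindex_inj (mulfI a0)) mulr_sumr /=.
  rewrite (eq_bigl (fun u => u != 0)); last by move=> u; rewrite mulf_eq0 (negbTE a0).
  by apply: eq_bigr => u u0; rewrite (proj2 Hc).
move/eqP; rewrite -subr_eq0 -{1}(mul1r S) -mulrBl mulf_eq0 subr_eq0 eq_sym (negbTE z1) /=.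
by move/eqP.
Qed.

Lemma phi_pm (F : finFieldType) (phi : F -> algC) (x : F) :
  order2_char phi -> x != 0 -> phi x = 1 \/ phi x = -1.
Proof.
move=> [_ [_ H2]] x0; have := H2 x x0; move/eqP; rewrite -subr_eq0 subr_sqr_1 mulf_eq0.
by rewrite subr_eq0 addr_eq0 => /orP [/eqP ->|/eqP ->]; [left|right].
Qed.

Lemma phi_sq (F : finFieldType) (phi : F -> algC) (x : F) :
  order2_char phi -> x != 0 -> phi (x ^+ 2) = 1.
Proof. by move=> Hp x0; rewrite (mc_pow _ (proj1 Hp) x0) (proj2 (proj2 Hp) x x0). Qed.

Lemma phi_inv (F : finFieldType) (phi : F -> algC) (x : F) :
  order2_char phi -> x != 0 -> phi x^-1 = phi x.
Proof.
move=> Hp x0; rewrite (mc_inv (proj1 Hp) x0).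
by case: (phi_pm Hp x0) => ->; rewrite ?invr1 ?invrN ?invr1.
Qed.

Lemma phi_sum0 (F : finFieldType) (phi : F -> algC) :
  order2_char phi -> \sum_(u : F | u != 0) phi u = 0.
Proof.
move=> Hp; have [a [a0 pa]] := proj1 (proj2 Hp).
exact: mc_sum0 (proj1 Hp) a0 pa.
Qed.

Lemma phi_nonsq (F : finFieldType) (phi : F -> algC) (D : F) :
  order2_char phi -> D != 0 -> (forall z : F, z ^+ 2 != D) -> phi D = -1.
Proof.
move=> Hp D0 Hn; have Hc := proj1 Hp.
have [g Hg] := exists_gen F.
have g0 : g != 0.
  apply/eqP => g0; have := prim_expr_order Hg; rewrite g0 expr0n.
  by rewrite eqn0Ngt q1_gt0 /= => /eqP; rewrite eq_sym oner_eq0.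
have pg : phi g = -1.
  case: (phi_pm Hp g0) => // pg1; exfalso.
  have [a [a0 /eqP pa]] := proj1 (proj2 Hp); apply: pa.
  by rewrite -(dlogP Hg a0) mc_pow // pg1 expr1n.
rewrite -(dlogP Hg D0) mc_pow // pg.
case: (boolP (odd (dlog g D))) => od; first by rewrite -signr_odd od expr1.
exfalso; have E : ((dlog g D)./2).*2 = dlog g D.
  by rewrite -[RHS]odd_double_half (negbTE od) add0n.
by have := Hn (g ^+ (dlog g D)./2); rewrite -exprM muln2 E dlogP // eqxx.
Qed.

Lemma sqcount (F : finFieldType) (phi : F -> algC) (D : F) :
  odd #|F| -> order2_char phi -> D != 0 ->
  (#|[set z : F | z ^+ 2 == D]|%:R : algC) = 1 + phi D.
Proof.
move=> oq Hp D0.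
case: (boolP [exists w : F, w ^+ 2 == D]) => [/existsP [w /eqP Hw]|/existsPn Hn].
  have w0 : w != 0 by apply: contra D0 => /eqP w0; rewrite -Hw w0 expr0n.
  have -> : [set z : F | z ^+ 2 == D] = [set w; - w].
    by apply/setP => z; rewrite !inE -Hw eqf_sqr.
  by rewrite cards2 (neq_opp oq w0) -Hw phi_sq.
have -> : [set z : F | z ^+ 2 == D] = set0.
  by apply/setP => z; rewrite !inE (negbTE (Hn z)).
by rewrite cards0 (phi_nonsq Hp D0 Hn) subrr.
Qed.
Definition fF (F : finFieldType) (y : F) : F := y + 2 + y^-1.

Lemma fiber_eq (F : finFieldType) (u y : F) : odd #|F| ->
  ((y != 0) && (fF y == u)) = ((2 * y + (2 - u)) ^+ 2 == u * (u - 4)).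
Proof.
move=> oq; have t0 := two_neq0 oq.
have f0 : (4 : F) != 0.
  by rewrite (_ : (4 : F) = 2 * 2) ?mulf_neq0 // -natrM.
case: (y =P 0) => [->|/eqP y0] /=.
  apply/esym/negbTE; rewrite mulr0 add0r -subr_eq0.
  have -> : (2 - u) ^+ 2 - u * (u - 4) = 4 by ring.
  exact: f0.
have -> : (2 * y + (2 - u)) ^+ 2 == u * (u - 4) = (4 * y * (fF y - u) == 0).
  rewrite -subr_eq0; congr (_ == _); rewrite /fF; field; exact: y0.
by rewrite !mulf_eq0 (negbTE f0) (negbTE y0) /= subr_eq0.
Qed.

Lemma fiber_card (F : finFieldType) (phi : F -> algC) (u : F) : odd #|F| -> order2_char phi ->
  u != 0 ->
  (#|[set y : F | (y != 0) && (fF y == u)]|%:R : algC) =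
  1 + (if u == 4 then 0 else phi (u * (u - 4))).
Proof.
move=> oq Hp u0; have t0 := two_neq0 oq.
have -> : [set y : F | (y != 0) && (fF y == u)] =
   (fun y => 2 * y + (2 - u)) @^-1: [set z : F | z ^+ 2 == u * (u - 4)].
  by apply/setP => y; rewrite !inE fiber_eq.
rewrite card_preimset; last by move=> a b /addIr /(mulfI t0).
case: (u =P 4) => [->|/eqP u4].
  have -> : [set z : F | z ^+ 2 == 4 * (4 - 4)] = [set 0].
    by apply/setP => z; rewrite !inE subrr mulr0 expf_eq0.
  by rewrite cards1 addr0.
apply: sqcount => //; rewrite mulf_neq0 // subr_eq0 //.
Qed.
Lemma T_eq (F : finFieldType) (omega phi : F -> algC) (m : nat) :
  odd #|F| -> order2_char phi ->
  \sum_(y : F | (y != 0) && (fF y != 0)) omega (fF y) ^+ m =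
  \sum_(u : F | u != 0) omega u ^+ m +
  \sum_(u : F | (u != 0) && (u != 4)) omega u ^+ m * phi (u * (u - 4)).
Proof.
move=> oq Hp.
rewrite (partition_big (fun y : F => fF y) (fun u => u != 0)); last by move=> y /andP [].
rewrite big_mkcondr /= -big_split /=; apply: eq_bigr => u u0.
rewrite (eq_big (fun y => y \in [set y : F | (y != 0) && (fF y == u)]) (fun _ => omega u ^+ m)).
- rewrite sumr_const -[_ *+ #|_|]mulr_natr (fiber_card oq Hp u0) mulrDr mulr1; congr (_ + _).
  by case: (u == 4); rewrite ?mulr0.
- move=> y /=; rewrite in_set; case: (y != 0) => //=.
  by case: (fF y =P u) => [->|]; rewrite ?u0 ?andbF.
- by move=> y /andP [_ /eqP ->].
Qed.

Definition Ksum (F : finFieldType) (omega phi : F -> algC) (m : nat) : algC :=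
  \sum_(v : F | (v != 0) && (v != -1)) (omega v ^+ m)^-1 * phi (1 + v).

Lemma D_eq (F : finFieldType) (omega phi : F -> algC) (m : nat) :
  odd #|F| -> mult_char omega -> order2_char phi ->
  \sum_(u : F | (u != 0) && (u != 4)) omega u ^+ m * phi (u * (u - 4)) =
  omega (-4) ^+ m * Ksum omega phi m.
Proof.
move=> oq Hw Hp; have t0 := two_neq0 oq.
have f0 : (4 : F) != 0.
  by rewrite (_ : (4 : F) = 2 * 2) ?mulf_neq0 // -natrM.
have mf0 : (-4 : F) != 0 by rewrite oppr_eq0.
have inj : injective (fun v : F => -4 * v^-1).
  by move=> a b /(mulfI mf0) /invr_inj.
rewrite (reindex_inj inj) /Ksum mulr_sumr /=.
rewrite (eq_bigl (fun v => (v != 0) && (v != -1))); last first.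
  move=> v /=; rewrite mulf_eq0 invr_eq0 (negbTE mf0) /=.
  case: (v =P 0) => [->|/eqP v0] //=.
  congr negb; apply/eqP/eqP => [E|->]; last by rewrite invrN invr1 mulrN1 opprK.
  have E2 : 4 * v = -4 by rewrite -[in LHS]E -mulrA mulVf // mulr1.
  have : 4 * (v + 1) = 0 by rewrite mulrDr mulr1 E2 addNr.
  by move/eqP; rewrite mulf_eq0 (negbTE f0) /= addr_eq0 => /eqP.
apply: eq_bigr => v /andP [v0 v1].
have v10 : 1 + v != 0 by rewrite addrC addr_eq0.
rewrite (proj2 Hw) ?invr_eq0 // (mc_inv Hw v0) exprMn mulrA; congr (_ * _).
  by rewrite exprVn.
have -> : -4 * v^-1 * (-4 * v^-1 - 4) = (4 * v^-1) ^+ 2 * (1 + v).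
  by field.
rewrite (proj2 (proj1 Hp)) ?phi_sq ?mul1r // ?expf_neq0 ?mulf_neq0 ?invr_eq0 //.
Qed.
Lemma K0 (F : finFieldType) (omega phi : F -> algC) :
  order2_char phi -> Ksum omega phi 0 = -1.
Proof.
move=> Hp; rewrite /Ksum.
under eq_bigr do rewrite expr0 invr1 mul1r.
have inj : injective (fun w : F => w - 1) by move=> a b /addIr.
rewrite (reindex_inj inj) /=.
rewrite (eq_bigl (fun w => (w != 0) && (w != 1))); last first.
  by move=> w /=; rewrite subr_eq0 subr_eq addNr andbC.
under eq_bigr do rewrite addrC subrK.
have := phi_sum0 Hp; rewrite (bigD1 1) ?oner_eq0 //= (proj1 (proj1 Hp)).
move/eqP; rewrite addrC addr_eq0 => /eqP <-; apply: eq_bigl => w.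
by rewrite andbC.
Qed.

Lemma psi0 (F : finFieldType) (p : nat) (pF : p \in [pchar F]) (zeta : algC) :
  zeta ^+ trace_nat p (0 : F) = 1.
Proof.
have [H1 H2] := trace_natP pF (0 : F).
have E : modn (trace_nat p (0%R : F)) p = modn 0%N p.
  apply: (natF_mod pF); rewrite H1 /abs_trace big1 // => i _.
  by rewrite expr0n eqn0Ngt expn_gt0 prime_gt0 // (pcharf_prime pF).
by move: E; rewrite mod0n modn_small // => ->; rewrite expr0.
Qed.

Lemma gauss_prod (F : finFieldType) (p : nat) (pF : p \in [pchar F]) (zeta : algC)
  (Hz : p.-primitive_root zeta) (chi1 chi2 rho : F -> algC) :
  (forall x v, x != 0 -> v != 0 -> chi2 (x * v) = chi2 x * chi2 v) ->
  (forall x, x != 0 -> chi1 x * chi2 x = rho x) ->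
  gauss_sum p zeta chi1 * gauss_sum p zeta chi2 =
  \sum_(v : F | v != 0) chi2 v *
     \sum_(x : F | x != 0) rho x * zeta ^+ trace_nat p (x * (1 + v)).
Proof.
move=> H2 Hr; rewrite /gauss_sum mulr_suml.
transitivity (\sum_(x : F | x != 0) \sum_(v : F | v != 0)
                 chi2 v * (rho x * zeta ^+ trace_nat p (x * (1 + v)))).
  apply: eq_bigr => x x0; rewrite mulr_sumr (reindex_inj (mulfI x0)) /=.
  rewrite (eq_bigl (fun v => v != 0)); last by move=> v; rewrite mulf_eq0 (negbTE x0).
  apply: eq_bigr => v v0; rewrite H2 // -Hr // mulrDr mulr1 (psiD pF Hz).
  by ring.
rewrite exchange_big /=; apply: eq_bigr => v _; by rewrite mulr_sumr.
Qed.

Lemma inner_phi (F : finFieldType) (p : nat) (pF : p \in [pchar F]) (zeta : algC)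
  (Hz : p.-primitive_root zeta) (phi : F -> algC) (c : F) :
  order2_char phi -> c != 0 ->
  \sum_(x : F | x != 0) phi x * zeta ^+ trace_nat p (x * c) =
  phi c * gauss_sum p zeta phi.
Proof.
move=> Hp c0; rewrite /gauss_sum mulr_sumr.
have inj : injective (fun w : F => w * c^-1) by apply: mulIf; rewrite invr_eq0.
rewrite (reindex_inj inj) /=.
rewrite (eq_bigl (fun v => v != 0)); last by move=> v; rewrite mulf_eq0 invr_eq0 (negbTE c0) orbF.
apply: eq_bigr => w w0; rewrite mulfVK // (proj2 (proj1 Hp)) ?invr_eq0 // phi_inv //.
by rewrite mulrA [phi w * _]mulrC.
Qed.

Lemma inner_one (F : finFieldType) (p : nat) (pF : p \in [pchar F]) (zeta : algC)
  (Hz : p.-primitive_root zeta) (c : F) : c != 0 ->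
  \sum_(x : F | x != 0) 1 * zeta ^+ trace_nat p (x * c) = -1.
Proof.
move=> c0; have := psi_sum0 pF Hz c0; rewrite (bigD1 0) //= mulr0 (psi0 pF).
move/eqP; rewrite addrC addr_eq0 => /eqP <-.
by apply: eq_bigr => x _; rewrite mul1r mulrC.
Qed.
Lemma gauss_phi_sq (F : finFieldType) (p : nat) (pF : p \in [pchar F]) (zeta : algC)
  (Hz : p.-primitive_root zeta) (phi : F -> algC) :
  order2_char phi ->
  gauss_sum p zeta phi * gauss_sum p zeta phi = phi (-1) * (#|F|%:R).
Proof.
move=> Hp; have Hc := proj1 Hp.
have m10 : (-1 : F) != 0 by rewrite oppr_eq0 oner_eq0.
rewrite (gauss_prod pF Hz (rho := fun _ => 1)); last 2 first.
- by move=> x v x0 v0; rewrite (proj2 Hc).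
- by move=> x x0; rewrite -expr2 (proj2 (proj2 Hp)).
rewrite (bigD1 (-1)) //= subrr.
under eq_bigr do rewrite mulr0 (psi0 pF) mulr1.
rewrite sumr_const.
rewrite (eq_bigr (fun v => phi v * (-1))); last first.
  move=> v /andP [v0 v1]; rewrite inner_one //.
  by rewrite addrC addr_eq0.
rewrite -mulr_suml.
have := phi_sum0 Hp; rewrite (bigD1 (-1)) //= => /eqP; rewrite addrC addr_eq0 => /eqP ->.
have -> : #|[pred x : F | x != 0]| = #|F|.-1.
  by rewrite -(cardC1 (0 : F)); apply: eq_card.
rewrite mulrN1 opprK -{2}(mulr1 (phi (-1))) -mulrDr; congr (_ * _).
rewrite -[in RHS](prednK (ltnW (finNzRing_gt1 F))).
by rewrite -natr1.
Qed.

Lemma gauss_main (F : finFieldType) (p : nat) (pF : p \in [pchar F]) (zeta : algC)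
  (Hz : p.-primitive_root zeta) (omega phi : F -> algC) (m : nat) :
  mult_char omega -> order2_char phi ->
  gauss_sum p zeta (fun x => phi x * omega x ^+ m) *
  gauss_sum p zeta (fun x => (omega x ^+ m)^-1) =
  gauss_sum p zeta phi * Ksum omega phi m.
Proof.
move=> Hw Hp.
have m10 : (-1 : F) != 0 by rewrite oppr_eq0 oner_eq0.
rewrite (gauss_prod pF Hz (rho := phi)); last 2 first.
- by move=> x v x0 v0; rewrite (proj2 Hw) // exprMn invfM.
- by move=> x x0; rewrite mulfK // expf_neq0 // (mc_neq0 Hw x0).
rewrite (bigD1 (-1)) //= subrr.
under eq_bigr do rewrite mulr0 (psi0 pF) mulr1.
rewrite phi_sum0 // mulr0 add0r /Ksum mulr_sumr; apply: eq_bigr => v /andP [v0 v1].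
rewrite inner_phi //; last by rewrite addrC addr_eq0.
by rewrite mulrA mulrC.
Qed.
Lemma sum_delta0 (n : nat) (X : algC) : (0 < n)%N ->
  \sum_(m < n) ((nat_of_ord m == 0%N)%:R * X) = X.
Proof.
case: n => // n _; rewrite big_ord_recl /= mul1r big1 ?addr0 // => i _.
by rewrite mul0r.
Qed.

Lemma prod_zero_factor (R : comRingType) (d : nat) (a : 'I_d -> R) (i : 'I_d) :
  a i = 0 -> \prod_(j < d) a j = 0.
Proof. by move=> ai; rewrite (bigD1 i) //= ai mul0r. Qed.

Lemma point_indicator (F : finFieldType) (omega : F -> algC) (d : nat) (b : F)
  (x : {ffun 'I_d -> F}) :
  char_generator omega -> b != 0 ->
  (([forall i, x i != 0] && (\prod_(i < d) (x i + 2 + (x i)^-1) == b))%:R : algC) =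
  (#|F|.-1%:R)^-1 * \sum_(m < #|F|.-1) omega b^-1 ^+ m *
     \prod_(i < d) (if (x i != 0) && (fF (x i) != 0) then omega (fF (x i)) ^+ m else 0).
Proof.
move=> Hg b0; have Hw := proj1 Hg.
have Q0 : (#|F|.-1%:R : algC) != 0 by rewrite pnatr_eq0 -lt0n q1_gt0.
case: (boolP [forall i, (x i != 0) && (fF (x i) != 0)]) => [/forallP C|/forallPn [i Ci]].
  have -> : [forall i, x i != 0] by apply/forallP => i; case/andP: (C i).
  have P0 : forall i, fF (x i) != 0 by move=> i; case/andP: (C i).
  have Pn0 : \prod_(i < d) fF (x i) != 0.
    by rewrite prodf_seq_neq0; apply/allP => i _; rewrite P0.
  rewrite (eq_bigr (fun m : 'I_#|F|.-1 => omega (b^-1 * \prod_(i < d) fF (x i)) ^+ m)); last first.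
    move=> m _.
    rewrite (eq_bigr (fun i => omega (fF (x i)) ^+ m)); last by move=> i _; rewrite C.
    rewrite prodrXl -(mc_prod Hw P0) -exprMn -(proj2 Hw) ?invr_eq0 //.
  rewrite orth1 //; last first.
    by rewrite mulf_eq0 invr_eq0 (negbTE b0) /= (negbTE Pn0).
  rewrite mulrCA mulVf // mulr1 /=; congr ((nat_of_bool _)%:R).
  rewrite /fF; apply/idP/idP => /eqP E; apply/eqP; first by rewrite E mulVf.
  by rewrite -[LHS](mulVKf b0) E mulr1.
rewrite [in RHS]big1 ?mulr0; last first.
  by move=> m _; rewrite (bigD1 i) //= (negbTE Ci) mul0r mulr0.
case: (boolP (x i != 0)) => xi0; last by rewrite (introF forallP) // => /(_ i); rewrite (negbTE xi0).
have fi0 : fF (x i) = 0 by move: Ci; rewrite xi0 /= negbK => /eqP.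
by rewrite (bigD1 i) //= -/(fF (x i)) fi0 mul0r eq_sym (negbTE b0) andbF.
Qed.
Lemma card_set_sum (T : finType) (P : pred T) :
  (#|[set x : T | P x]|%:R : algC) = \sum_(x : T) (P x)%:R.
Proof.
rewrite -sum1_card natr_sum big_mkcond /=; apply: eq_bigr => x _.
by rewrite inE; case: (P x).
Qed.

Theorem theorem4p1 (F : finFieldType) (p d : nat) (t : F)
    (omega phi : F -> algC) (zeta : algC) :
  odd #|F| -> p \in [pchar F] -> (2 <= d)%N -> t != 0 ->
  char_generator omega -> order2_char phi ->
  p.-primitive_root zeta ->
  (#|Xt_points d t|%:R : algC) =
    ((#|F|%:R - 2) ^+ d - (-1) ^+ d) / (#|F|%:R - 1)
    - (-1) ^+ d * Hq p zeta omega phi d t.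
Proof.
move=> oq pF d2 t0 Hg Hp Hz.
have Hw := proj1 Hg.
have t2 := two_neq0 oq.
have f0 : (4 : F) != 0.
  by rewrite (_ : (4 : F) = 2 * 2) ?mulf_neq0 // -natrM.
have b0 : (4 ^+ d * t^-1 : F) != 0 by rewrite mulf_neq0 ?expf_neq0 ?invr_eq0.
have HQ : (#|F|.-1%:R : algC) = #|F|%:R - 1.
  by rewrite -[in RHS](prednK (ltnW (finNzRing_gt1 F))) -natr1 addrK.
have Q0 : (#|F|%:R - 1 : algC) != 0 by rewrite -HQ pnatr_eq0 -lt0n q1_gt0.
pose G (m : nat) (y : F) : algC :=
  if (y != 0) && (fF y != 0) then omega (fF y) ^+ m else 0.
have step1 : (#|Xt_points d t|%:R : algC) = (#|F|.-1%:R)^-1 *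
    \sum_(m < #|F|.-1) omega (4 ^+ d * t^-1)^-1 ^+ m * (\sum_y G m y) ^+ d.
  rewrite /Xt_points card_set_sum.
  rewrite (eq_bigr _ (fun x _ => point_indicator x Hg b0)) -mulr_sumr; congr (_ * _).
  rewrite exchange_big /=; apply: eq_bigr => m _; rewrite -mulr_sumr; congr (_ * _).
  by rewrite -(bigA_distr_bigA (fun (i : 'I_d) y => G m y)) prodr_const card_ord.
have step3 : forall m : 'I_#|F|.-1,
    omega (4 ^+ d * t^-1)^-1 ^+ m * (\sum_y G m y) ^+ d =
    Ksum omega phi m ^+ d * omega ((-1) ^+ d * t) ^+ m +
    (nat_of_ord m == 0%N)%:R * ((#|F|%:R - 2) ^+ d - (-1) ^+ d).
  move=> m.
  have -> : \sum_y G m y = (nat_of_ord m == 0%N)%:R * (#|F|.-1)%:R + omega (-4) ^+ m * Ksum omega phi m.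
    by rewrite /G -big_mkcond /= (T_eq omega m oq Hp) (orth2 Hg (ltn_ord m)) (D_eq m oq Hw Hp).
  case: (nat_of_ord m =P 0%N) => [->|m0].
    rewrite K0 // !expr0 !mul1r HQ mulr1 [RHS]addrC subrK -addrA -opprD.
    by congr ((_ - _) ^+ d).
  rewrite mul0r add0r mul0r addr0 exprMn mulrA mulrC; congr (_ * _).
  rewrite -exprM mulnC exprM -exprMn; congr (_ ^+ _).
  have m4 : (-4 : F) != 0 by rewrite oppr_eq0.
  rewrite -(mc_pow _ Hw m4) -(proj2 Hw _ _ (invr_neq0 b0) (expf_neq0 _ m4)).
  congr (omega _); rewrite invfM invrK -mulN1r exprMn.
  by field; rewrite expf_neq0.
rewrite step1 (eq_bigr _ (fun m _ => step3 m)) big_split /= sum_delta0 ?q1_gt0 //.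
rewrite /Hq /=.
have Gphi0 : gauss_sum p zeta phi != 0.
  apply/eqP => E; have := gauss_phi_sq pF Hz Hp; rewrite E mul0r => /esym/eqP.
  have qn0 : (#|F| == 0%N) = false by rewrite eqn0Ngt (ltnW (finNzRing_gt1 F)).
  rewrite mulf_eq0 pnatr_eq0 qn0 orbF.
  have m10 : (-1 : F) != 0 by rewrite oppr_eq0 oner_eq0.
  by case: (phi_pm Hp m10) => ->; rewrite ?oner_eq0 ?oppr_eq0 ?oner_eq0.
rewrite [in RHS](eq_bigr (fun m : 'I_#|F|.-1 => Ksum omega phi m ^+ d * omega ((-1) ^+ d * t) ^+ m)); last first.
  by move=> m _; rewrite gauss_main // [_ * Ksum _ _ _]mulrC mulfK.
rewrite HQ.
set S := \sum_(m < _) _.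
set X := (_ ^+ d - _).
have E1 : (-1) ^+ d * (-1) ^+ d = 1 :> algC by rewrite -exprMn mulrNN mulr1 expr1n.
rewrite mulrA mulrA E1 mul1r.
have Q1 : (1 - #|F|%:R : algC) != 0 by rewrite -opprB oppr_eq0.
by field; rewrite Q1 Q0.
Qed.
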